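(* Let $C_{\vec B}$ be a Cantor set with scale factor $N$ and digit set $D$. Let $D_1,\dots,D_k$ be all the $2$-element subsets of $\{0,1,\dots,N-1\}$, and let $\vec B_1,\dots,\vec B_k$ be the associated binary digit vectors of length $N$. Then for any choice of irrational numbers $x_i\in C_{\vec B_i}$, $i=1,\dots,k$, we have $$D=\bigcup_{i\in A}D_i,\qquad\text{where } A=\{i : F_{\vec B}(x_i)\notin\mathbb Q\}.$$ In particular $D$ is uniquely determined by $\{(x_i,F_{\vec B}(x_i))\}_{i=1}^k$.
   Context: A Cantor set is specified by an integer scale factor $N\ge3$ and a digit set $D\subset\{0,\dots,N-1\}$ with $2\le|D|\le N-1$; equivalently by the binary digit vector $\vec B=(b_0,\dots,b_{N-1})$ with $b_i=1$ iff $i\in D$, $\|\vec B\|=|D|$. With $\phi_d(x)=(x+d)/N$ for $d\in D$, $C_{\vec B}\subset[0,1]$ is the unique nonempty compact set with $C_{\vec B}=\bigcup_{d\in D}\phi_d(C_{\vec B})$, and $\mu_{\vec B}$ is the unique Borel probability measure with $\mu_{\vec B}=\frac{1}{\|\vec B\|}\sum_{d\in D}\mu_{\vec B}\circ\phi_d^{-1}$. The CDF is $F_{\vec B}(x)=\mu_{\vec B}([0,x])$, $x\in[0,1]$. *)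

(* Defs.v *)
From HB Require Import structures.
From mathcomp Require Import all_boot all_order all_algebra.
From mathcomp Require Import all_classical all_reals all_analysis.
Unset Printing Implicit Defensive.
Import Order.TTheory GRing.Theory Num.Theory.
Import numFieldNormedType.Exports.
Local Open Scope classical_set_scope.
Local Open Scope ring_scope.

Definition cphi {R : realType} (N : nat) (d : nat) (x : R) : R :=
  (x + d%:R) / N%:R.

Definition ifs_invariant {R : realType} (N : nat) (D : {set 'I_N}) (K : set R) :=
  compact K /\ K !=set0 /\
  K = \bigcup_(d in [set d : 'I_N | d \in D]) (cphi N d @` K).

(* C_B : the unique nonempty compact set with C = U_{d in D} phi_d(C),
   described as the intersection of all such sets (there is exactly one). *)
Definition cantor_set {R : realType} (N : nat) (D : {set 'I_N}) : set R :=
  [set x | forall K : set R, ifs_invariant N D K -> K x].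

Definition self_similar {R : realType} (N : nat) (D : {set 'I_N})
  (mu : probability R R) :=
  mu (~` `[0, 1]%classic) = 0%E /\
  forall A : set R, measurable A ->
    mu A = (((#|D|%:R)^-1 : R)%:E *
           \sum_(d in D) mu (cphi N d @^-1` A))%E.

(* Main.v *)
Require Import Defs.
From HB Require Import structures.
From mathcomp Require Import all_boot all_order all_algebra.
From mathcomp Require Import all_classical all_reals all_analysis.
From mathcomp Require Import ring lra.
Import Order.TTheory GRing.Theory Num.Theory.
Import numFieldNormedType.Exports.
Local Open Scope classical_set_scope.
Local Open Scope ring_scope.

Section Cantor.
Variables (R : realType) (N : nat) (Di : {set 'I_N}).
Hypothesis hN : (2 <= N)%N.

Definition shiftd (d : 'I_N) (y : R) : R := N%:R * y - (d : nat)%:R.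

Fixpoint Kn (n : nat) : set R := match n with
 | 0 => `[0, 1]%classic
 | n'.+1 => `[0,1]%classic `&`
    \big[setU/set0]_(d <- enum Di) (shiftd d @^-1` Kn n')
end.

Lemma bigU_mem (s : seq 'I_N) (F : 'I_N -> set R) y :
  (\big[setU/set0]_(d <- s) F d) y <-> exists2 d, d \in s & F d y.
Proof.
elim: s => [|a s IH]; first by rewrite big_nil; split => // -[].
rewrite big_cons; split.
  case=> [Fa|/IH [d ds Fd]]; first by exists a => //; rewrite inE eqxx.
  by exists d => //; rewrite inE ds orbT.
move=> [d]; rewrite inE => /orP [/eqP ->|ds] Fd; first by left.
by right; apply/IH; exists d.
Qed.

Lemma KnS n y : Kn n.+1 y <-> (0 <= y <= 1 /\ exists2 d, d \in Di & Kn n (shiftd d y)).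
Proof.
rewrite /= /setI /=; rewrite in_itv /=; split.
  by move=> [h1 /bigU_mem [d]]; rewrite mem_enum => dD h; split => //; exists d.
move=> [h1 [d dD h]]; split => //; apply/bigU_mem; exists d => //.
by rewrite mem_enum.
Qed.

Lemma Kn01 n y : Kn n y -> 0 <= y <= 1.
Proof. by case: n => [|n]; [rewrite /= in_itv|move/KnS => []]. Qed.

Lemma Kn_decr n : Kn n.+1 `<=` Kn n.
Proof.
elim: n => [|n IH] y.
  by move/Kn01 => h; rewrite /= in_itv.
move/KnS => [h1 [d dD h]]; apply/KnS; split => //; exists d => //.
exact: IH.
Qed.

Lemma Kn_le m n : (m <= n)%N -> Kn n `<=` Kn m.
Proof.
move=> /subnK <-; elim: (n - m)%N => [|k IH] y //.
by rewrite addSn => /Kn_decr /IH.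
Qed.

Lemma shiftd_cont d : continuous (shiftd d).
Proof.
move=> y; rewrite /shiftd.
apply: cvgB; last exact: cvg_cst.
apply: cvgMr; exact: cvg_id.
Qed.

Lemma Kn_closed n : closed (Kn n).
Proof.
elim: n => [|n IH] /=.
  exact: interval_closed.
apply: closedI; first exact: interval_closed.
apply: closed_bigsetU => d _.
apply: preimage_closed => //; move=> z _; exact: shiftd_cont.
Qed.


Definition K0 : set R := [set y | forall n, Kn n y].

Lemma Nr_gt0 : 0 < N%:R :> R.
Proof. by rewrite ltr0n; apply: leq_trans hN. Qed.

Lemma K0_step y : K0 y -> exists2 d, d \in Di & K0 (shiftd d y).
Proof.
move=> Ky; apply: contrapT => H.
have H' : forall d : 'I_N, exists n, d \in Di -> ~ Kn n (shiftd d y).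
  move=> d; case: (boolP (d \in Di)) => dD; last by exists 0%N.
  have /existsNP [n hn] : ~ K0 (shiftd d y) by move=> h; apply: H; exists d.
  by exists n.
have [f hf] := choice H'.
set M := (\max_(d in Di) f d)%N.
have /KnS [_ [d dD h]] := Ky M.+1.
apply: (hf d dD); apply: (@Kn_le (f d) M _ _ h).
by apply: (leq_bigmax_cond (F := f)).
Qed.

Lemma cphi_shiftd (d : 'I_N) (z : R) : shiftd d (cphi N d z) = z.
Proof.
rewrite /shiftd /cphi mulrC -mulrA mulVf ?mulr1 ?addrK //.
by rewrite gt_eqF // Nr_gt0.
Qed.

Lemma shiftd_cphi (d : 'I_N) (y : R) : cphi N d (shiftd d y) = y.
Proof.
rewrite /shiftd /cphi subrK mulrC mulrA mulVf ?mul1r //.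
by rewrite gt_eqF // Nr_gt0.
Qed.

Lemma cphi01 (d : 'I_N) (z : R) : 0 <= z <= 1 -> 0 <= cphi N d z <= 1.
Proof.
move=> /andP [z0 z1]; rewrite /cphi.
have hd : (d : nat)%:R + 1 <= N%:R :> R by rewrite natr1 ler_nat ltn_ord.
have Np := Nr_gt0.
rewrite divr_ge0 ?addr_ge0 ?ler0n ?(ltW Np) //=.
rewrite ler_pdivrMr // mul1r; lra.
Qed.

Lemma K0_inv : K0 = \bigcup_(d in [set d : 'I_N | d \in Di]) (cphi N d @` K0).
Proof.
apply/seteqP; split => y.
  move=> Ky; have [d dD Kd] := @K0_step y Ky.
  by exists d => //; exists (shiftd d y) => //; rewrite shiftd_cphi.
move=> [d /= dD [z Kz <-]] [|n].
  by rewrite /= in_itv /=; apply: cphi01; exact: (@Kn01 0%N z (Kz 0%N)).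
apply/KnS; split; first by apply: cphi01; exact: (@Kn01 0%N z (Kz 0%N)).
by exists d => //; rewrite cphi_shiftd.
Qed.

Lemma K0_compact : compact K0.
Proof.
have cK : closed K0.
  have -> : K0 = \bigcap_(n in [set: nat]) Kn n.
    by apply/seteqP; split => y /= h n //; apply: h.
  by apply: closed_bigI => n _; exact: Kn_closed.
have sc : compact (`[0, 1]%classic : set R) := @segment_compact R 0 1.
apply: (subclosed_compact cK sc).
by move=> y /(_ 0%N).
Qed.

Lemma K0_nonempty d0 : d0 \in Di -> K0 !=set0.
Proof.
move=> dD; have hN1 : 0 < N%:R - 1 :> R.
  by rewrite subr_gt0 ltr1n; apply: leq_trans hN.
have hd : (d0 : nat)%:R + 1 <= N%:R :> R by rewrite natr1 ler_nat ltn_ord.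
exists ((d0 : nat)%:R / (N%:R - 1)).
have fix0 : shiftd d0 ((d0 : nat)%:R / (N%:R - 1)) = (d0 : nat)%:R / (N%:R - 1).
  rewrite /shiftd; field; lra.
have b01 : 0 <= (d0 : nat)%:R / (N%:R - 1 : R) <= 1.
  rewrite divr_ge0 ?ler0n ?(ltW hN1) //= ler_pdivrMr // mul1r; lra.
elim=> [|n IH]; first by rewrite /= in_itv.
by apply/KnS; split => //; exists d0; rewrite ?fix0.
Qed.

Lemma cantor_K0 d0 y : d0 \in Di -> cantor_set N Di y -> K0 y.
Proof.
move=> dD; apply; split; first exact: K0_compact.
split; [exact: K0_nonempty dD | exact: K0_inv].
Qed.

Lemma digits_exist d0 x : d0 \in Di -> K0 x ->
  exists (xs : nat -> R) (es : nat -> 'I_N), xs 0%N = x /\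
  forall k, [/\ es k \in Di, 0 <= xs k <= 1 & xs k.+1 = shiftd (es k) (xs k)].
Proof.
move=> dD Kx.
have H : forall y : R, exists d : 'I_N, K0 y -> d \in Di /\ K0 (shiftd d y).
  move=> y; case: (pselect (K0 y)) => Ky; last by exists d0.
  by have [d h1 h2] := @K0_step y Ky; exists d.
have [g hg] := choice H.
pose xs k := iter k (fun y => shiftd (g y) y) x.
have Kxs : forall k, K0 (xs k).
  elim=> [|k IH] //=; exact: (hg _ IH).2.
exists xs, (fun k => g (xs k)); split => // k; split.
- exact: (hg _ (Kxs k)).1.
- exact: (@Kn01 0%N _ (Kxs k 0%N)).
- by [].
Qed.
End Cantor.
Arguments shiftd {R N}.

Section Rat.
Variable R : realType.

Lemma rat_ratr (q : rat) : rational (ratr q : R).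
Proof. by exists q. Qed.

Lemma rat_nat n : rational (n%:R : R).
Proof. by exists n%:R; rewrite // ratr_nat. Qed.

Lemma ratD (a b : R) : rational a -> rational b -> rational (a + b).
Proof. by move=> [p _ <-] [q _ <-]; exists (p + q); rewrite // rmorphD. Qed.

Lemma ratN (a : R) : rational a -> rational (- a).
Proof. by move=> [p _ <-]; exists (- p); rewrite // rmorphN. Qed.

Lemma ratB (a b : R) : rational a -> rational b -> rational (a - b).
Proof. by move=> ha hb; apply: ratD => //; apply: ratN. Qed.

Lemma ratM (a b : R) : rational a -> rational b -> rational (a * b).
Proof. by move=> [p _ <-] [q _ <-]; exists (p * q); rewrite // rmorphM. Qed.

Lemma ratV (a : R) : rational a -> rational (a^-1).
Proof. by move=> [p _ <-]; exists (p^-1); rewrite // fmorphV. Qed.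

Lemma ratX (a : R) n : rational a -> rational (a ^+ n).
Proof. by move=> [p _ <-]; exists (p ^+ n); rewrite // rmorphXn. Qed.

End Rat.

Section Periodic.
Variables (R : realType) (N : nat).
Hypothesis hN : (2 <= N)%N.
Variables (xs : nat -> R) (es : nat -> 'I_N).
Hypothesis hxs : forall k, 0 <= xs k <= 1 /\ xs k.+1 = shiftd (es k) (xs k).

Lemma xs_affine k : exists2 r, rational r & xs k = N%:R ^+ k * xs 0%N - r.
Proof.
elim: k => [|k [r hr IH]]; first by exists 0; [exact: (rat_nat R 0) | rewrite expr0 mul1r subr0].
have [_ ->] := hxs k; rewrite /shiftd IH.
exists (N%:R * r + (es k : nat)%:R).
  by apply: ratD; [apply: ratM => //; apply: rat_nat | apply: rat_nat].
by rewrite exprS; ring.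
Qed.

Lemma periodic_rat n n' : (n < n')%N ->
  (forall j, es (n + j) = es (n' + j)) -> rational (xs 0%N).
Proof.
move=> nn' he.
have Npos : 1 < N%:R :> R by rewrite ltr1n.
pose d j := xs (n + j) - xs (n' + j).
have dS j : d j.+1 = N%:R * d j.
  rewrite /d !addnS; have [_ ->] := hxs (n + j); have [_ ->] := hxs (n' + j).
  by rewrite /shiftd he; ring.
have dj j : d j = N%:R ^+ j * d 0%N.
  by elim: j => [|j IH]; rewrite ?expr0 ?mul1r // dS IH exprS mulrA.
have dle j : `|d j| <= 1.
  rewrite /d; have [h1 _] := hxs (n + j); have [h2 _] := hxs (n' + j).
  move: h1 h2 => /andP [h1 h1'] /andP [h2 h2']; rewrite ler_norml; apply/andP; split; lra.
have d0 : d 0%N = 0.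
  apply: contrapT => /eqP nz.
  have ap : 0 < `|d 0%N| by rewrite normr_gt0.
  pose j := Num.bound (`|d 0%N|^-1).
  have h1 : `|d 0%N|^-1 < j%:R by apply: archi_boundP; rewrite invr_ge0 ltW.
  have h2 : (j < N ^ j)%N by apply: ltn_expl.
  have h3 : j%:R <= N%:R ^+ j :> R by rewrite -natrX ler_nat ltnW.
  have := dle j; rewrite dj normrM normrX ger0_norm ?ler0n //.
  have : 1 < N%:R ^+ j * `|d 0%N|.
    rewrite -ltr_pdivrMr //; apply: (lt_le_trans _ h3); by rewrite div1r.
  move=> a b; have := lt_le_trans a b; by rewrite ltxx.
have eqx : xs n = xs n'.
  by apply/eqP; rewrite -subr_eq0; move: d0; rewrite /d !addn0 => ->.
have [r hr er] := xs_affine n; have [r' hr' er'] := xs_affine n'.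
have hne : N%:R ^+ n' - N%:R ^+ n != 0 :> R.
  rewrite subr_eq0 -!natrX eqr_nat; apply/negP => /eqP h.
  by move: (ltn_exp2l n n' hN); rewrite h ltnn nn'.
have -> : xs 0%N = (r' - r) / (N%:R ^+ n' - N%:R ^+ n).
  apply: (mulIf hne); rewrite divfK //.
  move: eqx; rewrite er er' => eqx; rewrite mulrBr; lra.
apply: ratM; first exact: ratB.
by apply: ratV; apply: ratB; apply: ratX; apply: rat_nat.
Qed.

End Periodic.

Lemma sum_lt_card N (D : {set 'I_N}) (e : nat) :
  (\sum_(d in D) (d < e) = #|[set d in D | (d < e)%N]|)%N.
Proof.
rewrite -sum1_card big_mkcond /= [RHS]big_mkcond /=.
apply: eq_bigr => d _; rewrite inE; by case: (d \in D); case: (d < e)%N.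
Qed.

Section Measure.
Variables (R : realType) (N : nat) (D : {set 'I_N}) (mu : probability R R).
Hypothesis hN : (2 <= N)%N.
Hypothesis hss : self_similar N D mu.

Lemma mu_restrS (S A : set R) : measurable A -> measurable S -> mu (~` S) = 0%E ->
  mu A = mu (A `&` S).
Proof.
move=> mA mS h0.
rewrite (measureDI mu mA mS) [X in (X + _)%E](_ : _ = 0%E) ?add0e //.
apply/eqP; rewrite -measure_le0.
apply: (@le_trans _ _ (mu (~` S))); last by rewrite h0.
apply: le_measure.
- by rewrite inE; apply: measurableD.
- by rewrite inE; apply: measurableC.
- by move=> z [].
Qed.

Lemma mu_restr A : measurable A -> mu A = mu (A `&` `[0, 1]%classic).
Proof.
move=> mA; exact: (mu_restrS _ _ mA (measurable_itv _) hss.1).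
Qed.

Lemma mu01 : mu `[0, 1]%classic = 1%E.
Proof. by rewrite -(probability_setT mu) (@mu_restr setT measurableT) setTI. Qed.

Lemma mu_fin A : measurable A -> mu A = (fine (mu A))%:E.
Proof.
move=> mA; rewrite fineK // ge0_fin_numE ?measure_ge0 //.
by rewrite (le_lt_trans (probability_le1 mu mA)) ?ltey.
Qed.

Definition Fr (y : R) := fine (mu `[0, y]%classic).

Lemma Fr01 y : 0 <= Fr y <= 1.
Proof.
have m := measurable_itv `[0, y].
have h0 := measure_ge0 mu `[0, y]%classic.
have h1 := probability_le1 mu m.
rewrite (mu_fin _ m) in h0 h1; rewrite /Fr.
rewrite -!lee_fin; apply/andP; split => //.
by rewrite lee_fin fine_ge0 // measure_ge0.
Qed.

Definition cnt (e : 'I_N) := #|[set d in D | (d < e)%N]|.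


Lemma Nr_pos : 0 < N%:R :> R.
Proof. by rewrite ltr0n; apply: leq_trans hN. Qed.

Lemma pre_itv (d : 'I_N) (y : R) :
  cphi N d @^-1` `[0, y]%classic = `[- (d : nat)%:R, shiftd d y]%classic.
Proof.
have Np := Nr_pos.
apply/seteqP; split => z /=; rewrite !in_itv /= /cphi /shiftd.
  rewrite ler_pdivrMr // ler_pdivlMr // mul0r; move=> /andP [h1 h2]; apply/andP; split; lra.
rewrite ler_pdivrMr // ler_pdivlMr // mul0r.
move=> /andP [h1 h2]; apply/andP; split; lra.
Qed.

Lemma Fr_step (e : 'I_N) (y : R) : 0 < shiftd e y < 1 ->
  Fr y = (#|D|%:R)^-1 * ((cnt e)%:R + (e \in D)%:R * Fr (shiftd e y)).
Proof.
move=> /andP [t0 t1]; set t := shiftd e y; rewrite -/t in t0 t1.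
have sd : forall d : 'I_N, shiftd d y = t + (e : nat)%:R - (d : nat)%:R.
  by move=> d; rewrite /t /shiftd; ring.
have key : forall d : 'I_N, mu (cphi N d @^-1` `[0, y]%classic) =
    ((((d < e)%N)%:R + (d == e)%:R * Fr t))%:E.
  move=> d; rewrite pre_itv (mu_restr _ (measurable_itv _)) sd.
  have dp : 0 <= (d : nat)%:R :> R := ler0n _ _.
  have ep : 0 <= (e : nat)%:R :> R := ler0n _ _.
  case: (ltngtP d e) => hde.
  - have hl : (d : nat)%:R + 1 <= (e : nat)%:R :> R by rewrite natr1 ler_nat.
    have -> : d == e = false by apply/negbTE; rewrite neq_ltn hde.
    rewrite mulr0n mul0r addr0.
    rewrite (_ : _ `&` _ = `[0, 1]%classic) ?mu01 //.
    apply/seteqP; split => z /=; first by move=> [].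
    rewrite !in_itv /= => /andP [h1 h2]; split; last by rewrite h1 h2.
    have H : 1 <= t + (e : nat)%:R - (d : nat)%:R by lra.
    by rewrite (le_trans _ h1) ?oppr_le0 // (le_trans h2 H).
  - have hl : (e : nat)%:R + 1 <= (d : nat)%:R :> R by rewrite natr1 ler_nat.
    have -> : d == e = false by apply/negbTE; rewrite neq_ltn hde orbT.
    rewrite mulr0n mul0r addr0.
    rewrite (_ : _ `&` _ = set0) ?measure0 //.
    apply/seteqP; split => z //=.
    rewrite !in_itv /= => -[/andP [h1 h2] /andP [h3 h4]]; lra.
  - have de : d = e by apply: val_inj.
    rewrite de ?eqxx ?ltnn mulr1n add0r mul1r addrK.
    rewrite /Fr -(mu_fin _ (measurable_itv _)) (mu_restr _ (measurable_itv `[0, t])).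
    congr (mu _); apply/seteqP; split => z /=; rewrite !in_itv /=.
      move=> [/andP [h1 h2] /andP [h3 h4]]; split; apply/andP; split; lra.
    move=> [/andP [h1 h2] /andP [h3 h4]]; split; apply/andP; split; lra.
rewrite /Fr (hss.2 _ (measurable_itv _)).
under eq_bigr => d _ do rewrite key.
rewrite sumEFin -EFinM /=; congr (_ * _).
rewrite big_split /= -natr_sum sum_lt_card; congr (_ + _).
rewrite -mulr_suml; congr (_ * _).
case: (boolP (e \in D)) => eD.
  rewrite (bigD1 e) //= eqxx big1 ?addr0 // => d /andP [_ /negbTE ->] //.
rewrite big1 // => d dD; have /negbTE -> // : d != e.
by apply: contraNneq eD => <-.
Qed.

End Measure.
Arguments cnt {N}. Arguments Fr {R}. 

Lemma rat0 (R : realType) : rational (0 : R).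
Proof. exact: (rat_nat R 0). Qed.

Lemma rat1 (R : realType) : rational (1 : R).
Proof. exact: (rat_nat R 1). Qed.

Section Main.
Variables (R : realType) (N : nat) (D : {set 'I_N}) (mu : probability R R).
Hypothesis hN : (2 <= N)%N.
Hypothesis hss : self_similar N D mu.
Hypothesis hD : (0 < #|D|)%N.

Lemma cnt_lt (e e' : 'I_N) : e \in D -> (e < e')%N -> (cnt D e < cnt D e')%N.
Proof.
move=> eD ee'; apply: proper_card; apply/properP; split.
  apply/fintype.subsetP => d; rewrite !inE => /andP [-> /= h]; exact: ltn_trans h ee'.
by exists e; rewrite !inE ?eD ?ltnn //= ee'.
Qed.

Lemma cnt_inj (e e' : 'I_N) : e \in D -> e' \in D -> cnt D e = cnt D e' -> e = e'.
Proof.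
move=> eD e'D h; apply: val_inj => /=; case: (ltngtP e e') => // hl.
  by have := @cnt_lt e e' eD hl; rewrite h ltnn.
by have := @cnt_lt e' e e'D hl; rewrite h ltnn.
Qed.

Lemma cnt_max (e : 'I_N) : e \in D -> (cnt D e < #|D|)%N.
Proof.
move=> eD; apply: proper_card; apply/properP; split.
  by apply/fintype.subsetP => d; rewrite !inE => /andP [].
by exists e; rewrite // !inE ltnn andbF.
Qed.

Lemma irr01 (y : R) : irrational y -> 0 <= y <= 1 -> 0 < y < 1.
Proof.
move=> hi /andP [h0 h1]; rewrite !lt_neqAle h0 h1 !andbT; apply/andP; split.
  by apply/eqP => h; apply: hi; rewrite -h; exact: rat0.
by apply/eqP => h; apply: hi; rewrite h; exact: rat1.
Qed.

Variables (xs : nat -> R) (es : nat -> 'I_N).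
Hypothesis hxs : forall k, 0 <= xs k <= 1 /\ xs k.+1 = shiftd (es k) (xs k).
Hypothesis hirr : irrational (xs 0%N).

Lemma xs_irr k : irrational (xs k).
Proof.
elim: k => [//|k IH] h; apply: IH.
have [_ e] := hxs k.
have Np : N%:R != 0 :> R by rewrite pnatr_eq0 -lt0n; apply: leq_trans hN.
have -> : xs k = (xs k.+1 + (es k : nat)%:R) / N%:R.
  by rewrite e /shiftd subrK mulrC mulKf.
by apply: ratM; [apply: ratD => //; exact: rat_nat | apply: ratV; exact: rat_nat].
Qed.

Lemma xs01 k : 0 < xs k.+1 < 1.
Proof. by apply: irr01; [exact: xs_irr | exact: (hxs k.+1).1]. Qed.

Definition u k := Fr mu (xs k).

Lemma u_step k : #|D|%:R * u k = (cnt D (es k))%:R + (es k \in D)%:R * u k.+1.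
Proof.
have h := xs01 k; rewrite (hxs k).2 in h.
rewrite /u (@Fr_step R N D mu hN hss _ _ h) -(hxs k).2 mulrA mulfV ?mul1r //.
by rewrite pnatr_eq0 -lt0n.
Qed.


Lemma nat_frac_eq (c1 c2 : nat) (v1 v2 : R) : 0 < v1 < 1 -> 0 < v2 < 1 ->
  c1%:R + v1 = c2%:R + v2 -> c1 = c2.
Proof.
move=> /andP [a1 b1] /andP [a2 b2] h; case: (ltngtP c1 c2) => // hc.
  have : c1%:R + 1 <= c2%:R :> R by rewrite natr1 ler_nat.
  move=> hh; exfalso; lra.
have : c2%:R + 1 <= c1%:R :> R by rewrite natr1 ler_nat.
move=> hh; exfalso; lra.
Qed.

Let per := @periodic_rat R N hN xs es hxs.

Lemma case_sub : (forall k, es k \in D) -> irrational (u 0%N).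
Proof.
move=> eD hrat; apply: hirr.
set m : R := #|D|%:R.
have mpos : 0 < m by rewrite ltr0n.
have step k : m * u k = (cnt D (es k))%:R + u k.+1.
  by rewrite u_step eD mul1r.
have ub k : 0 <= u k <= 1 by exact: Fr01.
have cmax k : (cnt D (es k))%:R + 1 <= m.
  by rewrite natr1 ler_nat; apply: cnt_max.
have cge k : 0 <= (cnt D (es k))%:R :> R := ler0n _ _.
case: (pselect (exists k, u k = 0 \/ u k = 1)) => [[k hk]|hb].
  have inv : forall j, u (k + j) = u k.
    elim=> [|j IH]; first by rewrite addn0.
    have := step (k + j); rewrite IH addnS.
    have := ub (k + j).+1; have := cmax (k + j); have := cge (k + j).
    case: hk => -> a b /andP [c d] e; lra.
  apply: (@per k k.+1) => // j.
  apply: cnt_inj; [exact: eD | exact: eD | apply/eqP].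
  rewrite -(eqr_nat R) (_ : (k.+1 + j)%N = (k + j.+1)%N); last by rewrite addSnnS.
  have := step (k + j); have := step (k + j.+1).
  rewrite -!addnS !inv => a b; apply/eqP; lra.
have hb' k : 0 < u k < 1.
  have := ub k; rewrite !lt_neqAle => /andP [-> ->]; rewrite !andbT.
  apply/andP; split; apply/eqP => h; apply: hb; exists k; [left|right]; by [].
have [a [b hab]] := (rationalP _).1 hrat.
have bnz : b%:R != 0 :> R.
  apply/eqP => b0; have := hb' 0%N; rewrite hab b0 invr0 mulr0 ltxx //.
have zk k : b%:R * u k \is a Num.Def.int_num.
  elim: k => [|k IH]; first by rewrite hab mulrC divfK // intr_int.
  have -> : b%:R * u k.+1 = m * (b%:R * u k) - (b * cnt D (es k))%:R.
    by rewrite mulrCA step natrM mulrDr addrC addKr.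
  by apply: rpredB; [apply: rpredM => //; exact: natr_int | exact: natr_int].
have nk k : b%:R * u k \is a Num.Def.nat_num.
  by rewrite natrEint zk /= mulr_ge0 ?ler0n //; case/andP: (ub k).
pose f k := Num.truncn (b%:R * u k).
have fk k : (f k)%:R = b%:R * u k by rewrite /f truncnK.
have flt k : (f k < b)%N.
  rewrite -(ltr_nat R) fk; have /andP [_ h1] := hb' k.
  by rewrite -[X in _ < X]mulr1 ltr_pM2l // lt0r bnz ler0n.
have : ~~ uniq (map f (iota 0 b.+1)).
  apply/negP => U.
  have h : (size (map f (iota 0 b.+1)) <= size (iota 0 b))%N.
    apply: (uniq_leq_size U) => y /mapP [k _ ->]; by rewrite mem_iota add0n flt.
  by move: h; rewrite size_map !size_iota ltnn.
move=> /(uniqPn 0%N) [i [j [ij jl]]].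
rewrite size_map size_iota in jl.
rewrite !(nth_map 0%N) ?size_iota ?(ltn_trans ij) // !nth_iota ?(ltn_trans ij) // !add0n.
move=> fij.
have uij : u i = u j.
  by apply: (mulfI bnz); rewrite -!fk fij.
have hc : forall l, u (i + l) = u (j + l) ->
    cnt D (es (i + l)) = cnt D (es (j + l)).
  move=> l IH; have e1 := step (i + l); have e2 := step (j + l).
  apply: (@nat_frac_eq _ _ (u (i + l).+1) (u (j + l).+1)); [exact: hb'|exact: hb'|].
  by rewrite -e1 -e2 IH.
have ukey : forall l, u (i + l) = u (j + l).
  elim=> [|l IH]; first by rewrite !addn0 uij.
  have e1 := step (i + l); have e2 := step (j + l).
  rewrite !addnS; move: e1 e2; rewrite IH (hc l IH) => -> /addrI //.
have key : forall l, es (i + l) = es (j + l).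
  by move=> l; apply: cnt_inj; [exact: eD|exact: eD|exact: hc].
exact: (@per i j).
Qed.

Lemma u_rat_back k : rational (u k.+1) -> rational (u k).
Proof.
move=> h; have st := u_step k.
have mnz : #|D|%:R != 0 :> R by rewrite pnatr_eq0 -lt0n.
have -> : u k = ((cnt D (es k))%:R + (es k \in D)%:R * u k.+1) / #|D|%:R.
  by rewrite -st mulrC mulKf.
apply: ratM; last by apply: ratV; exact: rat_nat.
by apply: ratD; [exact: rat_nat | apply: ratM => //; exact: rat_nat].
Qed.

Lemma case_notsub (Di : {set 'I_N}) : #|Di| = 2%N -> (forall k, es k \in Di) ->
  ~~ (Di \subset D) -> rational (u 0%N).
Proof.
move=> c2 eDi /fintype.subsetPn [a aDi aD].
have [k ek] : exists k, es k \notin D.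
  apply: contrapT => hn.
  have allD k : es k \in D.
    by case: (boolP (es k \in D)) => // h; exfalso; apply: hn; exists k.
  have : #|Di :\ a| == 1%N.
    by move: c2; rewrite (cardsD1 a Di) aDi add1n => -[->].
  move=> /cards1P [b hb].
  have single k : es k = b.
    apply/set1P; rewrite -hb !inE eDi andbT.
    by apply: contraNneq aD => <-; exact: allD.
  apply: hirr; apply: (@per 0%N 1%N) => // j; by rewrite !single.
have rk : rational (u k).
  have st := u_step k; rewrite (negbTE ek) mul0r addr0 in st.
  have mnz : #|D|%:R != 0 :> R by rewrite pnatr_eq0 -lt0n.
  have -> : u k = (cnt D (es k))%:R / #|D|%:R by rewrite -st mulrC mulKf.
  by apply: ratM; [exact: rat_nat | apply: ratV; exact: rat_nat].
have H : forall i, (i <= k)%N -> rational (u (k - i)).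
  elim=> [|i IH] hi; first by rewrite subn0.
  apply: u_rat_back; rewrite -subSn // subSS; apply: IH; exact: ltnW.
by have := H k (leqnn k); rewrite subnn.
Qed.
End Main.

Theorem lemma2p13 (R : realType) (N : nat) (D : {set 'I_N})
  (mu : probability R R) (x : {set 'I_N} -> R) :
  (3 <= N)%N -> (2 <= #|D| <= N.-1)%N ->
  self_similar N D mu ->
  (forall Di : {set 'I_N}, #|Di| = 2%N ->
     cantor_set N Di (x Di) /\ irrational (x Di)) ->
  D = \bigcup_(Di : {set 'I_N} | (#|Di| == 2%N) &&
                 `[< irrational (fine (mu `[0, x Di]%classic)) >]) Di.
Proof.
move=> hN3 /andP [hD2 _] hss hx.
have hN : (2 <= N)%N by apply: ltnW.
have hD : (0 < #|D|)%N by apply: ltn_trans hD2.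
have core : forall Di : {set 'I_N}, #|Di| = 2%N ->
    (Di \subset D <-> irrational (fine (mu `[0, x Di]%classic))).
  move=> Di c2; have [cx ix] := hx Di c2.
  have /card_gt0P [d0 d0Di] : (0 < #|Di|)%N by rewrite c2.
  have Kx := @cantor_K0 R N Di hN d0 (x Di) d0Di cx.
  have [xs [es [x0 hxs']]] := @digits_exist R N Di d0 (x Di) d0Di Kx.
  have hxs k : 0 <= xs k <= 1 /\ xs k.+1 = shiftd (es k) (xs k).
    by have [_ h1 h2] := hxs' k.
  have hirr : irrational (xs 0%N) by rewrite x0.
  have Fe : fine (mu `[0, x Di]%classic) = u R mu xs 0%N by rewrite /u /Fr x0.
  split.
    move=> sub; rewrite Fe; apply: (@case_sub R N D mu hN hss hD xs es hxs hirr) => k.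
    by have [h _ _] := hxs' k; apply: (fintype.subsetP sub).
  move=> hF; case: (boolP (Di \subset D)) => // nsub; exfalso; apply: hF.
  rewrite Fe; apply: (@case_notsub R N D mu hN hss hD xs es hxs hirr Di c2) => // k.
  by have [h _ _] := hxs' k.
apply/setP => i; apply/idP/idP.
  move=> iD.
  have /card_gt0P [j jD] : (0 < #|D :\ i|)%N.
    by move: hD2; rewrite (cardsD1 i D) iD add1n ltnS.
  move: jD; rewrite !inE => /andP [ji jD].
  have c2 : #|[set i; j]%SET| = 2%N by rewrite cards2 eq_sym ji.
  apply/bigcupP; exists [set i; j]%SET; last by rewrite !inE eqxx.
  rewrite c2 eqxx /=; apply/asboolP; apply/(core _ c2).
  by apply/fintype.subsetP => z; rewrite !inE => /orP [] /eqP ->.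
move=> /bigcupP [Di /andP [/eqP c2 /asboolP hF] iDi].
have := (core Di c2).2 hF => /fintype.subsetP; apply.
exact: iDi.
Qed.
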